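(* Let $0<b<c$ and let $(x_1,y_1),\ldots,(x_T,y_T)\in\mathbb{R}^d\times\{-1,+1\}$ be an arbitrary finite sequence of examples. Run the LASEC algorithm (described in the context) on this sequence, and let $t_1<t_2<\cdots<t_m$ be the rounds on which it makes a mistake, so that $m$ is its total number of mistakes. For $k=1,\ldots,m$ let $D_k$ be the matrix stored after the $k$-th update. Then for every sequence of vectors $u_1,\ldots,u_T\in\mathbb{R}^d$ and every $\gamma>0$, $$m\le \frac{1}{\gamma}L_{\gamma,T}(\{u_t\})+\frac{1}{\gamma}\sqrt{\Big(b\|u_{t_1}\|^2+cV_m+\sum_{k=1}^{m}(u_{t_k}^\top x_{t_k})^2\Big)\sum_{k=1}^{m}x_{t_k}^\top D_k^{-1}x_{t_k}},$$ where $V_m=\sum_{k=2}^{m}\|u_{t_k}-u_{t_{k-1}}\|^2$.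
   Context: LASEC algorithm with parameters $0<b<c$. Initialize $D_0=\frac{bc}{c-b}I\in\mathbb{R}^{d\times d}$, $e_0=0\in\mathbb{R}^d$, $k=1$. For $t=1,\ldots,T$: receive $x_t$; set $S_t=(D_{k-1}^{-1}+c^{-1}I)^{-1}+x_tx_t^\top$ and $\hat p_t=x_t^\top S_t^{-1}(I+c^{-1}D_{k-1})^{-1}e_{k-1}$; predict $\hat y_t=\mathrm{sign}(\hat p_t)$; receive $y_t$; if $\hat y_t\ne y_t$ (a mistake), set $e_k=(I+c^{-1}D_{k-1})^{-1}e_{k-1}+y_tx_t$, $D_k=S_t$, and $k\leftarrow k+1$. Hinge loss: $\ell_{\gamma,t}(u)=\max\{0,\gamma-y_tu^\top x_t\}$, and $L_{\gamma,T}(\{u_t\})=\sum_{t=1}^T\ell_{\gamma,t}(u_t)$. *)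

(* Defs.v *)
From HB Require Import structures.
From mathcomp Require Import all_boot all_order all_algebra.
Set Implicit Arguments. Unset Strict Implicit. Unset Printing Implicit Defensive.
Import Order.TTheory GRing.Theory Num.Theory.
Local Open Scope ring_scope.

Section LASEC.
Variables (R : rcfType) (d : nat) (b c : R).
(* examples: round t (t = 1..T) has instance x t and label y t *)
Variables (x : nat -> 'cV[R]_d) (y : nat -> R).

Definition qform (a : 'cV[R]_d) (M : 'M[R]_d) (a' : 'cV[R]_d) : R :=
  (a^T *m M *m a') 0 0.

Definition sqnorm (v : 'cV[R]_d) : R := (v^T *m v) 0 0.

Definition sgn (p : R) : R := if 0 <= p then 1 else -1.

Definition lasec_D0 : 'M[R]_d := (b * c / (c - b)) *: 1%:M.

Definition lasec_S (D : 'M[R]_d) (t : nat) : 'M[R]_d :=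
  invmx (invmx D + c^-1 *: 1%:M) + x t *m (x t)^T.

Definition lasec_shrink (D : 'M[R]_d) (e : 'cV[R]_d) : 'cV[R]_d :=
  invmx (1%:M + c^-1 *: D) *m e.

Definition lasec_p (D : 'M[R]_d) (e : 'cV[R]_d) (t : nat) : R :=
  ((x t)^T *m invmx (lasec_S D t) *m lasec_shrink D e) 0 0.

(* State after rounds 1..n: (D_{k}, e_{k}, list of mistake rounds t_1<..<t_k,
   list of stored matrices D_1,..,D_k). *)
Fixpoint lasec_run (n : nat)
  : 'M[R]_d * 'cV[R]_d * seq nat * seq 'M[R]_d :=
  match n with
  | 0 => (lasec_D0, 0, [::], [::])
  | n'.+1 =>
    let: (D, e, ts, Ds) := lasec_run n' in
    let t := n'.+1 in
    if sgn (lasec_p D e t) != y t then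
      let S := lasec_S D t in
      (S, lasec_shrink D e + y t *: x t, rcons ts t, rcons Ds S)
    else (D, e, ts, Ds)
  end.

Definition mistakes (T : nat) : seq nat := (lasec_run T).1.2.
Definition stored_D (T : nat) : seq 'M[R]_d := (lasec_run T).2.

End LASEC.

Definition hinge {R : rcfType} {d : nat} (gamma : R) (x : 'cV[R]_d) (y : R)
  (u : 'cV[R]_d) : R :=
  Num.max 0 (gamma - y * (u^T *m x) 0 0).

Definition cum_hinge {R : rcfType} {d : nat} (gamma : R) (T : nat)
  (x : nat -> 'cV[R]_d) (y : nat -> R) (u : nat -> 'cV[R]_d) : R :=
  \sum_(1 <= t < T.+1) hinge gamma (x t) (y t) (u t).

(* Main.v *)
Require Import Defs.
From HB Require Import structures.
From mathcomp Require Import all_boot all_order all_algebra.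
From mathcomp Require Import ring lra.
Import Order.TTheory GRing.Theory Num.Theory.
Local Open Scope ring_scope.
Set Implicit Arguments. Unset Strict Implicit. Unset Printing Implicit Defensive.
Section Lin.
Variables (R : rcfType) (n : nat).
Implicit Types (x v w z : 'cV[R]_n) (A M : 'M[R]_n).

Definition dot v w : R := (v^T *m w) 0 0.

Lemma dotC v w : dot v w = dot w v.
Proof. by rewrite /dot -(trmxK (w^T *m v)) trmx_mul trmxK [in RHS]mxE. Qed.

Lemma dotDl v v' w : dot (v + v') w = dot v w + dot v' w.
Proof. by rewrite /dot linearD /= mulmxDl mxE. Qed.
Lemma dotDr v w w' : dot v (w + w') = dot v w + dot v w'.
Proof. by rewrite /dot mulmxDr mxE. Qed.
Lemma dotZl a v w : dot (a *: v) w = a * dot v w.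
Proof. by rewrite /dot linearZ /= -scalemxAl mxE. Qed.
Lemma dotZr a v w : dot v (a *: w) = a * dot v w.
Proof. by rewrite /dot -scalemxAr mxE. Qed.
Lemma dotNl v w : dot (- v) w = - dot v w.
Proof. by rewrite -scaleN1r dotZl mulN1r. Qed.
Lemma dotNr v w : dot v (- w) = - dot v w.
Proof. by rewrite -scaleN1r dotZr mulN1r. Qed.
Lemma dotBl v v' w : dot (v - v') w = dot v w - dot v' w.
Proof. by rewrite dotDl dotNl. Qed.
Lemma dotBr v w w' : dot v (w - w') = dot v w - dot v w'.
Proof. by rewrite dotDr dotNr. Qed.
Lemma dot0l w : dot 0 w = 0.
Proof. by rewrite /dot linear0 mul0mx mxE. Qed.
Lemma dotMl A v w : dot (A *m v) w = dot v (A^T *m w).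
Proof. by rewrite /dot trmx_mul mulmxA. Qed.
Lemma dotMr A v w : dot v (A *m w) = dot (A^T *m v) w.
Proof. by rewrite dotMl trmxK. Qed.

Lemma dot_ge0 v : 0 <= dot v v.
Proof. rewrite /dot mxE; apply: sumr_ge0 => i _; rewrite mxE -expr2; exact: sqr_ge0. Qed.

Lemma dot_eq0 v : dot v v = 0 -> v = 0.
Proof.
rewrite /dot mxE => /eqP; rewrite psumr_eq0 => [/allP H|i _]; last first.
  by rewrite mxE -expr2 sqr_ge0.
apply/matrixP => i j; rewrite (ord1 j) mxE.
have := H i (mem_index_enum _); rewrite mxE -expr2 sqrf_eq0 => /eqP //.
Qed.

Lemma dot_gt0 v : v != 0 -> 0 < dot v v.
Proof.
move=> nz; rewrite lt_def dot_ge0 andbT; apply/eqP => /dot_eq0 h.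
by rewrite h eqxx in nz.
Qed.

Definition sym A := A^T = A.
Definition psd A := forall v, 0 <= dot v (A *m v).
Definition pd A := forall v, v != 0 -> 0 < dot v (A *m v).

Lemma pd_psd A : pd A -> psd A.
Proof.
move=> h v; have [->|nz] := eqVneq v 0; first by rewrite dot0l.
exact/ltW/h.
Qed.

Lemma pd_unit A : sym A -> pd A -> A \in unitmx.
Proof.
move=> sA pA; rewrite -row_free_unit -kermx_eq0; apply/eqP.
have K: kermx A *m A = 0 by apply/sub_kermxP.
apply/row_matrixP => i; rewrite row0.
have Ki : row i (kermx A) *m A = 0 by rewrite -row_mul K row0.
set r := row i (kermx A) in Ki *.
have h : A *m r^T = 0 by rewrite -sA -trmx_mul Ki linear0.
have : r^T = 0.
  apply/eqP; apply: contraT => nz; have := pA _ nz.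
  by rewrite h /dot mulmx0 mxE ltxx.
by move/(congr1 trmx); rewrite trmxK linear0.
Qed.

Lemma sym_inv A : sym A -> sym (invmx A).
Proof. by rewrite /sym trmx_inv => ->. Qed.

Lemma pd_inv A : sym A -> pd A -> pd (invmx A).
Proof.
move=> sA pA v nz; have uA := pd_unit sA pA.
set w := invmx A *m v.
have vw : v = A *m w by rewrite /w mulKVmx.
have wnz : w != 0 by apply: contraNneq nz; rewrite vw => ->; rewrite mulmx0.
by rewrite {1}vw dotMl sA; apply: pA.
Qed.

Lemma pd_add A B : pd A -> psd B -> pd (A + B).
Proof. by move=> pA pB v nz; rewrite mulmxDl dotDr; apply: ltr_wpDr (pB v) (pA v nz). Qed.

Lemma sym_add A B : sym A -> sym B -> sym (A + B).
Proof. by rewrite /sym linearD /= => -> ->. Qed.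

Lemma sym_scalar a : sym (a *: 1%:M).
Proof. by rewrite /sym linearZ /= trmx1. Qed.

Lemma pd_scalar a : 0 < a -> pd (a *: 1%:M).
Proof. by move=> a0 v nz; rewrite -scalemxAl mul1mx dotZr mulr_gt0 // dot_gt0. Qed.

Lemma psd_scalar a : 0 <= a -> psd (a *: 1%:M).
Proof. by move=> a0 v; rewrite -scalemxAl mul1mx dotZr mulr_ge0 // dot_ge0. Qed.

Lemma rank1E x v : x *m x^T *m v = dot x v *: x.
Proof. by rewrite -mulmxA [x^T *m v]mx11_scalar mul_mx_scalar. Qed.

Lemma psd_rank1 x : psd (x *m x^T).
Proof. by move=> v; rewrite rank1E dotZr (dotC v x) -expr2 sqr_ge0. Qed.

Lemma sym_rank1 x : sym (x *m x^T).
Proof. by rewrite /sym trmx_mul trmxK. Qed.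

Lemma dot_symM M v w : sym M -> dot v (M *m w) = dot w (M *m v).
Proof. by move=> sM; rewrite dotMr sM dotC. Qed.

Lemma quadB M v w : sym M ->
  dot (v - w) (M *m (v - w)) = dot v (M *m v) - 2 * dot v (M *m w) + dot w (M *m w).
Proof.
move=> sM; rewrite mulmxBr dotBl !dotBr (dot_symM w v sM); ring.
Qed.

Lemma psd_quad M v w : sym M -> psd M ->
  2 * dot v (M *m w) - dot w (M *m w) <= dot v (M *m v).
Proof. move=> sM pM; have := pM (v - w); rewrite quadB //; lra. Qed.

Lemma par D c z a : sym D -> pd D -> 0 < c ->
  dot z (invmx (invmx D + c^-1 *: 1%:M) *m z)
    <= dot a (D *m a) + c * dot (z - a) (z - a).
Proof.
move=> sD pD c0; have uD := pd_unit sD pD.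
set Q := invmx D + c^-1 *: 1%:M.
have sQ : sym Q by apply: sym_add; [exact: sym_inv|exact: sym_scalar].
have pQ : pd Q by apply: pd_add; [exact: pd_inv|apply: psd_scalar; rewrite invr_ge0 ltW].
have uQ := pd_unit sQ pQ.
set r := invmx Q *m z.
have zr : z = Q *m r by rewrite /r mulKVmx.
have QrE : Q *m r = invmx D *m r + c^-1 *: r by rewrite mulmxDl -scalemxAl mul1mx.
have h1 := psd_quad a (invmx D *m r) sD (pd_psd pD).
rewrite mulKVmx // in h1.
have h2 := dot_ge0 (c *: (z - a) - r).
rewrite !(dotBl, dotBr, dotZl, dotZr) in h2.
have e1 : dot z r = dot (invmx D *m r) r + c^-1 * dot r r.
  by rewrite {1}zr QrE dotDl dotZl.
have e2 : dot z r = dot a r + dot (z - a) r by rewrite dotBl; ring.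
idtac.
idtac.
have e3 : dot (z - a) (z - a) = dot z z - dot z a - (dot a z - dot a a).
  by rewrite !(dotBl, dotBr).
idtac.
rewrite (dotC r z) (dotC r a) in h2; rewrite (dotC a z) in h2 e3; rewrite e3.
have cn : c != 0 by rewrite gt_eqF.
have h3 : 0 <= c * (dot z z - dot z a - (dot z a - dot a a)) - 2 * (dot z r - dot a r) + c^-1 * dot r r.
  have ci : 0 <= c^-1 by rewrite invr_ge0 ltW.
  have := mulr_ge0 ci h2.
  suff -> : c^-1 * (c * (c * (dot z z - dot z a) - c * (dot z a - dot a a)) -
    c * (dot z r - dot a r) - (c * (dot z r - dot a r) - dot r r)) =
    c * (dot z z - dot z a - (dot z a - dot a a)) - 2 * (dot z r - dot a r) + c^-1 * dot r r by [].
  by field.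
lra.
Qed.



Lemma SE P x u : (P + x *m x^T) *m u = P *m u + dot x u *: x.
Proof. by rewrite mulmxDl rank1E. Qed.

Lemma inv_mono P x w : sym P -> pd P ->
  dot (P *m w) (invmx (P + x *m x^T) *m (P *m w)) <= dot w (P *m w).
Proof.
move=> sP pP; set S := P + x *m x^T.
have sS : sym S by apply: sym_add => //; exact: sym_rank1.
have pS : pd S by apply: pd_add => //; exact: psd_rank1.
have uS := pd_unit sS pS.
set s := P *m w; set v := invmx S *m s.
have sv : s = S *m v by rewrite /v mulKVmx.
have e1 : dot s v = dot v (P *m v) + dot x v ^+ 2.
  by rewrite {1}sv dotMl sS SE dotDr dotZr (dotC v x) expr2.
have h := psd_quad w v sP (pd_psd pP).
rewrite (dot_symM w v sP) -/s (dotC v s) in h.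
have := sqr_ge0 (dot x v); lra.
Qed.

Lemma par_shift D c u v w : sym D -> pd D -> 0 < c ->
  dot (u - w) (invmx (invmx D + c^-1 *: 1%:M) *m (u - w))
    <= dot (v - w) (D *m (v - w)) + c * dot (u - v) (u - v).
Proof.
move=> sD pD c0; have := par (u - w) (v - w) sD pD c0.
by have -> : u - w - (v - w) = u - v by rewrite opprB addrA subrK.
Qed.

Definition Psi M e u := - dot (u - invmx M *m e) (M *m (u - invmx M *m e)).

Lemma step D c x y e u v : sym D -> pd D -> 0 < c -> y * y = 1 ->
  let P := invmx (invmx D + c^-1 *: 1%:M) in
  let S := P + x *m x^T in
  let s := invmx (1%:M + c^-1 *: D) *m e in
  y * dot x (invmx S *m s) <= 0 ->
  Psi D e v - c * dot (u - v) (u - v) + 2 * y * dot u x - dot u x ^+ 2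
   <= Psi S (s + y *: x) u + dot x (invmx S *m x).
Proof.
move=> sD pD c0 yy P S s hp.
have uD := pd_unit sD pD.
set Q := invmx D + c^-1 *: 1%:M.
have sQ : sym Q by apply: sym_add; [exact: sym_inv|exact: sym_scalar].
have pQ : pd Q by apply: pd_add; [exact: pd_inv|apply: psd_scalar; rewrite invr_ge0 ltW].
have uQ := pd_unit sQ pQ.
have sP : sym P by exact: sym_inv.
have pP : pd P by exact: pd_inv.
have sS : sym S by apply: sym_add => //; exact: sym_rank1.
have pS : pd S by apply: pd_add => //; exact: psd_rank1.
have uS := pd_unit sS pS.
have siS : sym (invmx S) by exact: sym_inv.
set w := invmx D *m e.
have MDQ : 1%:M + c^-1 *: D = D *m Q by rewrite mulmxDr mulmxV // -scalemxAr mulmx1.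
have uM : 1%:M + c^-1 *: D \in unitmx by rewrite MDQ unitmx_mul uD uQ.
have sE : s = P *m w.
  rewrite /s; have -> : e = (1%:M + c^-1 *: D) *m (P *m w).
    by rewrite MDQ -mulmxA /P mulKVmx // /w mulKVmx.
  by rewrite mulKmx.
have hpar := par_shift u v w sD pD c0.
rewrite -/Q -/P (quadB u w sP) in hpar.
rewrite /Psi -/w.
set e' := s + y *: x.
set w' := invmx S *m e'.
rewrite quadB //.
have Sw' : S *m w' = e' by rewrite /w' mulKVmx.
rewrite (quadB u w' sS) Sw'.
have h1 : dot u e' = dot u (P *m w) + y * dot u x by rewrite /e' dotDr dotZr sE.
have h2 : dot u (S *m u) = dot u (P *m u) + dot u x ^+ 2.
  by rewrite /S SE dotDr dotZr (dotC x u) expr2.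
have h3 : dot w' e' = dot s (invmx S *m s) + 2 * y * dot x (invmx S *m s)
     + y * y * dot x (invmx S *m x).
  rewrite dotC /w' /e' mulmxDr -scalemxAr !(dotDl, dotDr, dotZl, dotZr).
  rewrite (dot_symM s x siS); ring.
have h4 := inv_mono x w sP pP.
rewrite -/S -sE in h4.
rewrite h1 h2 h3 yy.
rewrite -sE (quadB v w sD) in hpar *. lra.
Qed.

Lemma S_pd D c x : sym D -> pd D -> 0 < c ->
  sym (invmx (invmx D + c^-1 *: 1%:M) + x *m x^T) /\
  pd (invmx (invmx D + c^-1 *: 1%:M) + x *m x^T).
Proof.
move=> sD pD c0.
have sQ : sym (invmx D + c^-1 *: 1%:M) by apply: sym_add; [exact: sym_inv|exact: sym_scalar].
have pQ : pd (invmx D + c^-1 *: 1%:M).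
  by apply: pd_add; [exact: pd_inv|apply: psd_scalar; rewrite invr_ge0 ltW].
split; first by apply: sym_add; [exact: sym_inv|exact: sym_rank1].
by apply: pd_add; [exact: pd_inv|exact: psd_rank1].
Qed.

Lemma Psi_le0 M e u : sym M -> pd M -> Psi M e u <= 0.
Proof. by move=> sM pM; rewrite /Psi oppr_le0; apply: pd_psd. Qed.
End Lin.

Lemma sum_rcons (R : rcfType) (T : Type) (x0 : T) (F : nat -> T -> R) (s : seq T) (t : T) :
  \sum_(1 <= k < (size (rcons s t)).+1) F k (nth x0 (rcons s t) k.-1)
  = \sum_(1 <= k < (size s).+1) F k (nth x0 s k.-1) + F (size s).+1 t.
Proof.
rewrite size_rcons big_nat_recr //=; congr (_ + _); last by rewrite nth_rcons ltnn eqxx.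
apply: eq_big_nat => k /andP [k1 km]; rewrite nth_rcons.
by case: k k1 km => // k _ /=; rewrite ltnS => ->.
Qed.

Section Run.
Variables (R : rcfType) (d : nat) (b c : R) (x : nat -> 'cV[R]_d) (y : nat -> R).
Hypotheses (b0 : 0 < b) (bc : b < c).
Notation run := (lasec_run b c x y).

Lemma c0 : 0 < c. Proof. exact: lt_trans bc. Qed.

Lemma run_pd n : sym (run n).1.1.1 /\ pd (run n).1.1.1.
Proof.
elim: n => [|n IH] /=.
  split; first exact: sym_scalar.
  apply: pd_scalar; apply: divr_gt0; first exact: mulr_gt0 b0 c0.
  by rewrite subr_gt0.
move: IH; case: (run n) => [[[D e] ts] Ds] /= [sD pD].
case: ifP => _ //=.
exact: S_pd sD pD c0.
Qed.


Lemma run_size n : size (run n).2 = size (run n).1.2.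
Proof.
elim: n => //= n; case: (run n) => [[[D e] ts] Ds] /= IH.
by case: ifP => _ //=; rewrite !size_rcons IH.
Qed.

Lemma run_sub (h : nat -> R) n : (forall t, 0 <= h t) ->
  \sum_(1 <= k < (size (run n).1.2).+1) h (nth 0%N (run n).1.2 k.-1)
    <= \sum_(1 <= t < n.+1) h t.
Proof.
move=> hp; elim: n => [|n IH] /=; first by rewrite !big_geq.
rewrite [X in _ <= X]big_nat_recr //=.
move: IH; case: (run n) => [[[D e] ts] Ds] /= IH; case: ifP => _ /=.
  have E := sum_rcons 0%N (fun _ t => h t) ts n.+1; rewrite /= in E.
  by rewrite E; apply: lerD.
by rewrite -[X in X <= _]addr0; apply: lerD.
Qed.

Definition G (n : nat) (U : nat -> 'cV[R]_d) : R :=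
  let ts := (run n).1.2 in
  \sum_(1 <= k < (size ts).+1) (2 * y (nth 0%N ts k.-1) * dot (U k) (x (nth 0%N ts k.-1))
                                 - dot (U k) (x (nth 0%N ts k.-1)) ^+ 2)
  - dot (U 0%N) (lasec_D0 d b c *m U 0%N)
  - c * \sum_(1 <= k < (size ts).+1) dot (U k - U k.-1) (U k - U k.-1).

Definition Bs (n : nat) : R :=
  let ts := (run n).1.2 in let Ds := (run n).2 in
  \sum_(1 <= k < (size ts).+1)
     dot (x (nth 0%N ts k.-1)) (invmx (nth 0 Ds k.-1) *m x (nth 0%N ts k.-1)).

Lemma main n : (forall t, (1 <= t <= n)%N -> y t = 1 \/ y t = -1) ->
  forall U, G n U <= Psi (run n).1.1.1 (run n).1.1.2 (U (size (run n).1.2)) + Bs n.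
Proof.
elim: n => [|n IH] hy U.
  by rewrite /G /Bs /Psi /= !big_geq // mulmx0 subr0 mulr0 addr0 !subr0 add0r.
have hy' : forall t, (1 <= t <= n)%N -> y t = 1 \/ y t = -1.
  by move=> t /andP [t1 tn]; apply: hy; rewrite t1 (leq_trans tn).
have := IH hy' U; have [sD pD] := run_pd n; have sz := run_size n.
rewrite /G /Bs /=.
move: sD pD sz; case: (run n) => [[[D e] ts] Ds] /= sD pD sz.
case: ifP => hm /=; last by [].
set tn := n.+1.
have E1 := sum_rcons 0%N (fun k t => 2 * y t * dot (U k) (x t) - dot (U k) (x t) ^+ 2) ts tn.
have E2 := sum_rcons 0%N (fun k (_ : nat) => dot (U k - U k.-1) (U k - U k.-1)) ts tn.
rewrite /= in E1 E2; rewrite E1 E2.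
set S := lasec_S c x D tn.
have E3 : \sum_(1 <= k < (size (rcons ts tn)).+1)
     dot (x (nth 0%N (rcons ts tn) k.-1))
       (invmx (rcons Ds S)`_k.-1 *m x (nth 0%N (rcons ts tn) k.-1))
  = \sum_(1 <= k < (size ts).+1)
     dot (x (nth 0%N ts k.-1)) (invmx Ds`_k.-1 *m x (nth 0%N ts k.-1))
    + dot (x tn) (invmx S *m x tn).
  rewrite size_rcons big_nat_recr //=; congr (_ + _); last first.
    by rewrite !nth_rcons sz ltnn eqxx.
  apply: eq_big_nat => k /andP [k1 km]; rewrite !nth_rcons sz.
  by case: k k1 km => // k _ /=; rewrite ltnS => ->.
rewrite E3 size_rcons.
have yt : y tn = 1 \/ y tn = -1 by apply: hy; rewrite /tn leqnn.
have yy : y tn * y tn = 1 by case: yt => ->; rewrite ?mulr1 ?mulrNN ?mulr1.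
have hp : y tn * dot (x tn) (invmx S *m lasec_shrink c D e) <= 0.
  have -> : dot (x tn) (invmx S *m lasec_shrink c D e) = lasec_p c x D e tn.
    by rewrite /lasec_p /dot mulmxA.
  move: hm; rewrite /sgn; set p := lasec_p c x D e tn.
  case: ifP => hp0; case: yt => ->; rewrite ?eqxx //= => _.
    by rewrite mulN1r oppr_le0 hp0.
  by rewrite mul1r ltW // ltNge hp0.
have hs := @step _ _ D c (x tn) (y tn) e (U (size ts).+1) (U (size ts)) sD pD c0 yy.
cbv zeta in hs; have := hs hp.
rewrite /S /lasec_S /lasec_shrink.
lra.
Qed.

End Run.

Lemma sqrt_bound (R : rcfType) (s Q B : R) :
  (forall l, 2 * l * s - l ^+ 2 * Q <= B) -> s <= Num.sqrt (Q * B).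
Proof.
move=> H; have B0 : 0 <= B by have := H 0; rewrite !mulr0 mul0r expr0n /= mul0r subr0.
have [s0|s0] := lerP s 0; first exact: le_trans s0 (sqrtr_ge0 _).
have Q0 : 0 < Q.
  rewrite ltNge; apply/negP => Q0.
  have := H ((B + 1) / s).
  have e : 2 * ((B + 1) / s) * s = 2 * (B + 1) by field; rewrite gt_eqF.
  rewrite e; have : 0 <= ((B + 1) / s) ^+ 2 by apply: sqr_ge0.
  nra.
have := H (s / Q).
have e : 2 * (s / Q) * s - (s / Q) ^+ 2 * Q = s ^+ 2 / Q by field; rewrite gt_eqF.
rewrite e => h.
have h2 : s ^+ 2 <= Q * B.
  have : s ^+ 2 / Q * Q <= B * Q by apply: ler_wpM2r => //; apply: ltW.
  by rewrite mulfVK ?gt_eqF // mulrC.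
have QB0 : 0 <= Q * B by apply: mulr_ge0 => //; apply: ltW.
have := sqr_sqrtr QB0; have := sqrtr_ge0 (Q * B).
set r := Num.sqrt _ => r0 rr.
rewrite -rr in h2; nra.
Qed.

Unset Implicit Arguments.
Theorem theorem2 (R : rcfType) (d : nat) (b c : R) (T : nat)
  (x : nat -> 'cV[R]_d) (y : nat -> R) :
  0 < b -> b < c ->
  (forall t, (1 <= t <= T)%N -> y t = 1 \/ y t = -1) ->
  let ts := mistakes b c x y T in
  let Ds := stored_D b c x y T in
  let m := size ts in
  let tk := fun k : nat => nth 0%N ts k.-1 in
  let Dk := fun k : nat => nth 0 Ds k.-1 in
  forall (u : nat -> 'cV[R]_d) (gamma : R), 0 < gamma ->
  let Vm := \sum_(2 <= k < m.+1) sqnorm (u (tk k) - u (tk k.-1)) in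
  m%:R <= gamma^-1 * cum_hinge gamma T x y u
          + gamma^-1 * Num.sqrt
              ((b * sqnorm (u (tk 1%N)) + c * Vm
                + \sum_(1 <= k < m.+1) ((u (tk k))^T *m x (tk k)) 0 0 ^+ 2)
               * \sum_(1 <= k < m.+1) qform (x (tk k)) (invmx (Dk k)) (x (tk k))).
Proof.
move=> b0 bc hy ts Ds m tk Dk u gamma g0; cbv zeta.
set Vm := \sum_(2 <= k < m.+1) _.
have hpos : forall t, 0 <= hinge gamma (x t) (y t) (u t).
  by move=> t; rewrite /hinge le_max lexx.
set L := cum_hinge gamma T x y u.
have L0 : 0 <= L by apply: sumr_ge0 => t _.
set Q := (b * sqnorm _ + _ + _).
set B := \sum_(1 <= k < m.+1) _.
set s := \sum_(1 <= k < m.+1) y (tk k) * dot (u (tk k)) (x (tk k)).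
have hs : m%:R * gamma <= L + s.
  have := @run_sub _ _ b c x y (fun t => hinge gamma (x t) (y t) (u t)) T hpos.
  rewrite -/(mistakes b c x y T) -/ts -/m -/L => h.
  have h2 : \sum_(1 <= k < m.+1) (gamma - y (tk k) * dot (u (tk k)) (x (tk k)))
      <= \sum_(1 <= k < m.+1) hinge gamma (x (tk k)) (y (tk k)) (u (tk k)).
    by apply: ler_sum => k _; rewrite /hinge le_max lexx orbT.
  have h3 : \sum_(1 <= k < m.+1) (gamma - y (tk k) * dot (u (tk k)) (x (tk k)))
      = m%:R * gamma - s by rewrite sumrB sumr_const_nat subn1 /= mulr_natl.
  rewrite h3 in h2; rewrite /L /cum_hinge; move: h h2; rewrite /tk /s /tk; lra.
have [m0|mpos] := posnP m.
  have gi : 0 <= gamma^-1 by rewrite invr_ge0 ltW.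
  by rewrite m0; apply: addr_ge0; apply: mulr_ge0 => //; apply: sqrtr_ge0.
have c0 : 0 < c by apply: lt_trans bc.
have key : forall l, 2 * l * s - l ^+ 2 * Q <= B.
  move=> l.
  pose U := fun k => l *: (if k is 0 then ((c - b) / c) *: u (tk 1%N) else u (tk k)).
  have hm := main x b0 bc hy U.
  have [sD pD] := run_pd x y b0 bc T.
  have := Psi_le0 (lasec_run b c x y T).1.1.2 (U (size (lasec_run b c x y T).1.2)) sD pD.
  have eB : Bs b c x y T = B.
    by rewrite /Bs /B /tk /Dk /m /ts /Ds; apply: eq_bigr => k _; rewrite /qform /dot mulmxA.
  rewrite eB in hm.
  rewrite /G -/(mistakes b c x y T) -/ts -/m in hm.
  rewrite -/(mistakes b c x y T) -/ts -/m => hP.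
  have E1 : \sum_(1 <= k < m.+1)
       (2 * y (nth 0%N ts k.-1) * dot (U k) (x (nth 0%N ts k.-1)) -
        dot (U k) (x (nth 0%N ts k.-1)) ^+ 2)
     = 2 * l * s - l ^+ 2 * \sum_(1 <= k < m.+1) ((u (tk k))^T *m x (tk k)) 0 0 ^+ 2.
    rewrite /s !mulr_sumr -sumrB; apply: eq_big_nat => k /andP [k1 _].
    by case: k k1 => // k _; rewrite /U dotZl /dot; ring.
  set N := dot (u (tk 1%N)) (u (tk 1%N)).
  have E2 : dot (U 0%N) (lasec_D0 d b c *m U 0%N)
      = l ^+ 2 * (b * c / (c - b) * ((c - b) / c) ^+ 2) * N.
    by rewrite /U /lasec_D0 -scalemxAl mul1mx !dotZl !dotZr; rewrite /N; ring.
  have E3 : \sum_(1 <= k < m.+1) dot (U k - U k.-1) (U k - U k.-1)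
      = l ^+ 2 * ((b / c) ^+ 2 * N + Vm).
    rewrite big_ltn ?ltnS // mulrDr; congr (_ + _).
      rewrite /U /= -scalerBr !dotZl !dotZr !(dotBl, dotBr, dotZl, dotZr) /N.
      by field; rewrite gt_eqF.
    rewrite /Vm mulr_sumr; apply: eq_big_nat => k /andP [k1 _].
    case: k k1 => [|[|k]] // _.
    by rewrite /U /= -scalerBr dotZl dotZr mulrA -expr2.
  rewrite E1 E2 E3 in hm.
  have id : b * c / (c - b) * ((c - b) / c) ^+ 2 = b - c * (b / c) ^+ 2.
    by field; rewrite ?subr_eq0 ?gt_eqF ?(negbT (gt_eqF bc)) //; rewrite eq_sym gt_eqF.
  rewrite id in hm.
  have -> : Q = b * N + c * Vm + \sum_(1 <= k < m.+1) ((u (tk k))^T *m x (tk k)) 0 0 ^+ 2 by [].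
  move: hP hm; set P := Psi _ _ _ => hP.
  set S2 := \sum_(1 <= k < m.+1) _.
  set k2 := (b / c) ^+ 2.
  have -> : 2 * l * s - l ^+ 2 * S2 - l ^+ 2 * (b - c * k2) * N - c * (l ^+ 2 * (k2 * N + Vm))
     = 2 * l * s - l ^+ 2 * (b * N + c * Vm + S2) by ring.
  lra.
have := @sqrt_bound _ _ _ _ key.
set sq := Num.sqrt _ => hsq.
rewrite -mulrDr.
have -> : m%:R = gamma^-1 * (m%:R * gamma) by field; rewrite gt_eqF.
apply: ler_wpM2l; first by rewrite invr_ge0 ltW.
lra.
Qed.
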